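(* Let $\mathcal L$ be a factorial and almost prolongable language over a finite alphabet whose complexity function $p$ is unbounded and grows subexponentially. Then there exists an increasing sequence of positive integers $(n_d)_d$ such that the Rauzy graphs $R(n_d)$ converge to the line $\mathbf Z$ in the Benjamini–Schramm sense.
   Context: $\mathcal L_n=\mathcal L\cap\mathcal A^n$, $p(n)=|\mathcal L_n|$; $p$ grows subexponentially if $\lim_n\frac1n\log p(n)=0$. $\mathcal L$ is factorial if every subword of a word of $\mathcal L$ lies in $\mathcal L$. A word $v\in\mathcal L$ is left-prolongable (resp. right-prolongable) if $av\in\mathcal L$ (resp. $va\in\mathcal L$) for some letter $a$; $\mathcal L$ is almost prolongable if the proportions of left-prolongable and of right-prolongable words in $\mathcal L_n$ both tend to $1$. The Rauzy graph $R(n)$ has vertex set $\mathcal L_n$ and, for each $aub\in\mathcal L_{n+1}$ ($a,b$ letters), one edge between $au$ and $ub$ (loops and multiple edges allowed). Convergence to $\mathbf Z$ means: for each $r$, the proportion of vertices whose ball of radius $r$ is isomorphic to the ball of radius $r$ in the bi-infinite path tends to $1$. *)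

(* Defs.v *)
From HB Require Import structures.
From mathcomp Require Import all_boot all_order all_algebra.
From mathcomp Require Import boolp classical_sets reals topology normedtype
  sequences exp.
Set Implicit Arguments.
Unset Strict Implicit.
Unset Printing Implicit Defensive.
Import Order.TTheory GRing.Theory Num.Theory.
Import numFieldNormedType.Exports.
Local Open Scope classical_set_scope.
Local Open Scope ring_scope.

Section Lang.
Variable A : finType.
Variable L : pred (seq A).

Definition Ln (n : nat) : {set n.-tuple A} := [set t : n.-tuple A | L t].
Definition complexity (n : nat) : nat := #|Ln n|.

Definition factorial_language : Prop :=
  forall u v w : seq A, L (u ++ v ++ w) -> L v.

Definition left_prolongable (v : seq A) : bool := [exists a : A, L (a :: v)].
Definition right_prolongable (v : seq A) : bool := [exists a : A, L (rcons v a)].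

Definition almost_prolongable (R : realType) : Prop :=
  ((fun n : nat => (#|[set t in Ln n | left_prolongable t]|%:R
                    / (complexity n)%:R : R)) @ \oo --> (1 : R)) /\
  ((fun n : nat => (#|[set t in Ln n | right_prolongable t]|%:R
                    / (complexity n)%:R : R)) @ \oo --> (1 : R)).

Definition unbounded_complexity : Prop :=
  forall M : nat, exists n : nat, (M < complexity n)%N.

Definition subexponential (R : realType) : Prop :=
  (fun n : nat => (ln ((complexity n)%:R : R) / n%:R : R)) @ \oo --> (0 : R).
End Lang.

(* An undirected multigraph: each edge has two endpoints (src, tgt); the
   orientation is irrelevant (see adjacency and isomorphism below). *)
Record mgraph := MGraph {
  vert : Type;
  edge : Type;
  src : edge -> vert;
  tgt : edge -> vert }.

Definition adj (G : mgraph) (x y : vert G) : Prop :=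
  exists e : edge G, (src e = x /\ tgt e = y) \/ (src e = y /\ tgt e = x).

Fixpoint dist_le (G : mgraph) (r : nat) (x y : vert G) : Prop :=
  match r with
  | 0 => x = y
  | r'.+1 => @dist_le G r' x y \/ exists z, @dist_le G r' x z /\ @adj G z y
  end.

Lemma dist_le_refl (G : mgraph) (r : nat) (x : vert G) : @dist_le G r x x.
Proof. by elim: r => [|r IH] //=; left. Qed.

Definition rball (G : mgraph) (x : vert G) (r : nat) : mgraph :=
  @MGraph {y : vert G | @dist_le G r x y}
          {e : edge G | @dist_le G r x (src e) /\ @dist_le G r x (tgt e)}
          (fun e => exist _ (src (proj1_sig e)) (proj1 (proj2_sig e)))
          (fun e => exist _ (tgt (proj1_sig e)) (proj2 (proj2_sig e))).

Definition rball_root (G : mgraph) (x : vert G) (r : nat) : vert (rball x r) :=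
  exist _ x (dist_le_refl r x).

Definition rooted_iso (G1 : mgraph) (x1 : vert G1)
                      (G2 : mgraph) (x2 : vert G2) : Prop :=
  exists (f : vert G1 -> vert G2) (g : edge G1 -> edge G2),
    [/\ bijective f, bijective g, f x1 = x2 &
        forall e : edge G1,
          (src (g e) = f (src e) /\ tgt (g e) = f (tgt e)) \/
          (src (g e) = f (tgt e) /\ tgt (g e) = f (src e))].

Definition Zline : mgraph := @MGraph int int (fun i => i) (fun i => (i + 1)%R).

Section Rauzy.
Variable A : finType.
Variable L : pred (seq A).
Variable n : nat.

Definition rauzyV := {t : n.-tuple A | L t}.

(* for w = a u b in L_{n+1}:  au = wpre w,  ub = wsuf w *)
Definition wpre (t : n.+1.-tuple A) : n.-tuple A :=
  belast_tuple (thead t) (behead_tuple t).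
Definition wsuf (t : n.+1.-tuple A) : n.-tuple A := behead_tuple t.

(* Edges: words of L_{n+1} (whose prefix/suffix lie in L_n, which is
   automatic for a factorial language). *)
Definition rauzyE :=
  {t : n.+1.-tuple A | [&& L t, L (wpre t) & L (wsuf t)]}.

Lemma rauzy_src_proof (e : rauzyE) : L (wpre (proj1_sig e)).
Proof. by case: e => t /= /and3P[]. Qed.
Lemma rauzy_tgt_proof (e : rauzyE) : L (wsuf (proj1_sig e)).
Proof. by case: e => t /= /and3P[]. Qed.

Definition rauzy : mgraph :=
  @MGraph rauzyV rauzyE
    (fun e => exist _ (wpre (proj1_sig e)) (rauzy_src_proof e))
    (fun e => exist _ (wsuf (proj1_sig e)) (rauzy_tgt_proof e)).
End Rauzy.

Definition good_vertex (A : finType) (L : pred (seq A)) (n r : nat)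
  (v : rauzyV L n) : Prop :=
  rooted_iso (rball_root (G := rauzy L n) v r) (rball_root (G := Zline) 0%R r).

Definition good_proportion (R : realType) (A : finType) (L : pred (seq A))
  (n r : nat) : R :=
  #|[set v : rauzyV L n | `[< @good_vertex A L n r v >] ]|%:R / (complexity L n)%:R.

Definition rauzy_converges_to_Z (R : realType) (A : finType)
  (L : pred (seq A)) (nd : nat -> nat) : Prop :=
  forall r : nat,
    (fun d : nat => good_proportion R L (nd d) r) @ \oo --> (1 : R).

(* Main.v *)
Require Import Defs.
From HB Require Import structures.
From mathcomp Require Import all_boot all_order all_algebra.
From mathcomp Require Import boolp classical_sets reals topology normedtype
  sequences exp.
From mathcomp Require Import zify ring lra.
Set Implicit Arguments.
Unset Strict Implicit.
Unset Printing Implicit Defensive.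
Import Order.TTheory GRing.Theory Num.Theory.
Import numFieldNormedType.Exports.
Definition per (A : eqType) (l : nat) (s : seq A) : bool :=
  drop l s == take (size s - l) s.

Lemma per_of_drop (A : eqType) (l : nat) (u s : seq A) :
  u = drop l (u ++ s) -> per l u.
Proof.
move=> E; rewrite /per; apply/eqP.
case: (leqP l (size u)) => h.
  rewrite {3}E take_drop subnK // take_size_cat //.
rewrite drop_oversize ?(ltnW h) //.
have -> : (size u - l = 0)%N by lia.
by rewrite take0.
Qed.

Lemma per_take (A : eqType) (l m : nat) (s : seq A) : per l s ->
  take (l + m) s = take l s ++ take (minn m (size s - l)) s.
Proof. by move/eqP=> E; rewrite takeD E take_min. Qed.

Lemma per_inj (A : eqType) (l : nat) (s1 s2 : seq A) : (0 < l)%N ->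
  size s1 = size s2 -> per l s1 -> per l s2 -> take l s1 = take l s2 -> s1 = s2.
Proof.
move=> l0 hs p1 p2 ht.
suff H : forall m, take m s1 = take m s2.
  by rewrite -(take_size s1) H hs take_size.
move=> m; elim: m {-2}m (leqnn m) => [|M IH] m hm.
  by rewrite leqn0 in hm; move/eqP: hm => ->; rewrite !take0.
case: (leqP m l) => h.
  by rewrite -(take_takel s1 h) -(take_takel s2 h) ht.
have -> : m = l + (m - l) by lia.
rewrite (per_take _ p1) (per_take _ p2) ht hs; congr (_ ++ _).
apply: IH; lia.
Qed.
Section Dist.
Variable G : mgraph.
Implicit Types x y z : vert G.

Lemma dist_le_mono k k' x y : (k <= k')%N -> dist_le k x y -> dist_le k' x y.
Proof.
elim: k' => [|k' IH] Hle H.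
  by rewrite leqn0 in Hle; move/eqP: Hle => <-.
case: (leqP k k') => hk; first by left; exact: IH.
by have -> : k'.+1 = k by apply/eqP; rewrite eqn_leq Hle hk.
Qed.

Lemma adj_sym x y : adj x y -> adj y x.
Proof. by case=> e [[h1 h2]|[h1 h2]]; exists e; [right|left]. Qed.

Lemma dist_le_cons k x y z : adj x y -> dist_le k y z -> dist_le k.+1 x z.
Proof.
elim: k z => [|k IH] z Hxy /=.
  by move=> <-; right; exists x; split.
case=> [H|[w [H1 H2]]]; first by left; exact: IH.
by right; exists w; split => //; exact: IH.
Qed.

Lemma dist_le_sym k x y : dist_le k x y -> dist_le k y x.
Proof.
elim: k x y => [|k IH] x y /=; first by move->.
case=> [H|[z [H1 H2]]]; first by left; exact: IH.
exact: (dist_le_cons (adj_sym H2) (IH _ _ H1)).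
Qed.
End Dist.

Lemma sig_eqP (T : Type) (P : T -> Prop) (a b : {x | P x}) :
  proj1_sig a = proj1_sig b -> a = b.
Proof.
case: a => a ha; case: b => b hb /= E; subst b.
by rewrite (Prop_irrelevance ha hb).
Qed.

Lemma inj_surj_bij (T U : Type) (f : T -> U) :
  injective f -> (forall u, exists t, f t = u) -> bijective f.
Proof.
move=> fi fs; pose g u := proj1_sig (cid (fs u)).
exists g => [t|u]; last exact: (proj2_sig (cid (fs u))).
apply: fi; exact: (proj2_sig (cid (fs (f t)))).
Qed.

Lemma rooted_iso_sym (G1 : mgraph) (x1 : vert G1) (G2 : mgraph) (x2 : vert G2) :
  rooted_iso x1 x2 -> rooted_iso x2 x1.
Proof.
case=> f [g [[f' c1 c2] [g' d1 d2] hr H]].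
exists f', g'; split.
- by exists f.
- by exists g.
- by rewrite -hr c1.
move=> e; case: (H (g' e)); rewrite d2 => -[E1 E2]; [left|right];
  by rewrite E1 E2 !c1.
Qed.

Lemma rooted_iso_trans (G1 : mgraph) (x1 : vert G1) (G2 : mgraph) (x2 : vert G2)
  (G3 : mgraph) (x3 : vert G3) :
  rooted_iso x1 x2 -> rooted_iso x2 x3 -> rooted_iso x1 x3.
Proof.
case=> f [g [bf bg hr H]]; case=> f2 [g2 [bf2 bg2 hr2 H2]].
exists (f2 \o f), (g2 \o g); split.
- exact: bij_comp.
- exact: bij_comp.
- by rewrite /= hr hr2.
move=> e /=; case: (H2 (g e)) => -[E1 E2]; case: (H e) => -[F1 F2];
  rewrite E1 E2 F1 F2; by [left|right|right|left].
Qed.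
Section PathGraph.
Variable r : nat.
Definition Pv := {j : nat | (0 < j)%N && (j <= r + r + 1)%N}.
Definition Pe := {j : nat | (0 < j)%N && (j <= r + r)%N}.
Lemma Pe_src_proof (e : Pe) : (0 < val e)%N && (val e <= r + r + 1)%N.
Proof. case: e => j hj; move/andP: (hj) => [h1 h2]; apply/andP; split; rewrite /=; lia. Qed.
Lemma Pe_tgt_proof (e : Pe) : (0 < (val e).+1)%N && ((val e).+1 <= r + r + 1)%N.
Proof. case: e => j hj; move/andP: (hj) => [h1 h2]; apply/andP; split; rewrite /=; lia. Qed.
Definition Pgraph : mgraph := @MGraph Pv Pe
  (fun e => exist _ (val e) (Pe_src_proof e))
  (fun e => exist _ (val e).+1 (Pe_tgt_proof e)).
Lemma Proot_proof : (0 < r.+1)%N && (r.+1 <= r + r + 1)%N.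
Proof. apply/andP; split => //; lia. Qed.
Definition Proot : vert Pgraph := exist _ r.+1 Proot_proof.
End PathGraph.

Section Line.
Variables (G : mgraph) (x : vert G) (r : nat) (phi : nat -> vert G)
  (psi : nat -> edge G).
Hypothesis Hx : phi r.+1 = x.
Hypothesis P1 : forall i j, (i <= r + r + 2)%N -> (j <= r + r + 2)%N ->
  phi i = phi j -> i = j.
Hypothesis P2s : forall j, (j <= r + r + 1)%N -> src (psi j) = phi j.
Hypothesis P2t : forall j, (j <= r + r + 1)%N -> tgt (psi j) = phi j.+1.
Hypothesis P3s : forall j e, (0 < j)%N -> (j <= r + r + 1)%N ->
  src e = phi j -> e = psi j.
Hypothesis P3t : forall j e, (0 < j)%N -> (j <= r + r + 1)%N ->
  tgt e = phi j -> e = psi j.-1.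

Lemma ballA k y : (k <= r)%N -> dist_le k x y <->
  exists j, [/\ (r.+1 - k <= j)%N, (j <= r.+1 + k)%N & y = phi j].
Proof.
elim: k y => [|k IH] y hk /=.
  split; first by move=> <-; exists r.+1; rewrite subn0 addn0.
  by case=> j [h1 h2 ->]; have -> : j = r.+1 by lia.
split.
  case=> [H|[z [Hz Hzy]]].
    have [j [h1 h2 ->]] := (IH y (ltnW hk)).1 H.
    by exists j; split => //; lia.
  have [j [h1 h2 Ez]] := (IH z (ltnW hk)).1 Hz.
  case: Hzy => e [[E1 E2]|[E1 E2]].
    have He : e = psi j by apply: P3s; [lia|lia|rewrite E1].
    exists j.+1; split; [lia|lia|]; by rewrite -E2 He P2t //; lia.
  have He : e = psi j.-1 by apply: P3t; [lia|lia|rewrite E2].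
  exists j.-1; split; [lia|lia|].
  by rewrite -E1 He P2s //; lia.
case=> j [h1 h2 ->].
case: (leqP (r.+1 - k) j) => a; case: (leqP j (r.+1 + k)) => b.
- by left; apply/(IH _ (ltnW hk)); exists j.
- right; exists (phi j.-1); split.
    by apply/(IH _ (ltnW hk)); exists j.-1; split => //; lia.
  exists (psi j.-1); left; split; first by apply: P2s; lia.
  by rewrite P2t ?prednK //; lia.
- right; exists (phi j.+1); split.
    by apply/(IH _ (ltnW hk)); exists j.+1; split => //; lia.
  exists (psi j); right; split; first by apply: P2s; lia.
  by rewrite P2t //; lia.
- lia.
Qed.

Lemma near_phi j : (0 < j)%N -> (j <= r + r + 1)%N -> dist_le r x (phi j).
Proof. by move=> h1 h2; apply/(ballA _ (leqnn r)); exists j; split => //; lia. Qed.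

Lemma Fv_proof (v : Pv r) : dist_le r x (phi (val v)).
Proof. by case: v => j /= /andP[h1 h2]; exact: near_phi. Qed.

Definition Fv (v : Pv r) : vert (rball x r) := exist _ (phi (val v)) (Fv_proof v).

Lemma Fe_proof (e : Pe r) :
  dist_le r x (src (psi (val e))) /\ dist_le r x (tgt (psi (val e))).
Proof.
case: e => j /= /andP[h1 h2]; rewrite P2s ?P2t; try lia.
by split; apply: near_phi; lia.
Qed.

Definition Fe (e : Pe r) : edge (rball x r) := exist _ (psi (val e)) (Fe_proof e).

Lemma line_iso : rooted_iso (Proot r) (rball_root x r).
Proof.
exists (Fv : vert (Pgraph r) -> _), (Fe : edge (Pgraph r) -> _); split.
- apply: inj_surj_bij.
    move=> [a ha] [b hb] /(congr1 (@proj1_sig _ _)) /= E.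
    move/andP: (ha) => [? ?]; move/andP: (hb) => [? ?].
    apply: val_inj => /=; apply: P1 E; lia.
  move=> [y hy]; have [j [h1 h2 Ey]] := (ballA _ (leqnn r)).1 hy.
  have hj : (0 < j)%N && (j <= r + r + 1)%N by apply/andP; split; lia.
  by exists (exist _ j hj); apply: sig_eqP => /=.
- apply: inj_surj_bij.
    move=> [a ha] [b hb] /(congr1 (@proj1_sig _ _)) /= E.
    move/andP: (ha) => [? ?]; move/andP: (hb) => [? ?].
    apply: val_inj => /=; apply: P1; [lia|lia|].
    have := congr1 (@src G) E; rewrite !P2s; [by []|lia|lia].
  move=> [e [hs ht]].
  have [j [h1 h2 Ey]] := (ballA _ (leqnn r)).1 hs.
  have [k [k1 k2 Ek]] := (ballA _ (leqnn r)).1 ht.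
  have He : e = psi j by apply: P3s; [lia|lia|].
  have Hjk : j.+1 = k by apply: P1; [lia|lia|]; rewrite -Ek He P2t //; lia.
  have hj : (0 < j)%N && (j <= r + r)%N by apply/andP; split; lia.
  by exists (exist _ j hj); apply: sig_eqP => /=.
- by apply: sig_eqP => /=.
move=> [j hj]; left; split; apply: sig_eqP => /=.
  by rewrite P2s //; move/andP: hj => [? ?]; lia.
by rewrite P2t //; move/andP: hj => [? ?]; lia.
Qed.
End Line.

Lemma Zline_iso r : rooted_iso (Proot r) (rball_root (G := Zline) 0%R r).
Proof.
apply: (@line_iso Zline 0%R r (fun j => (j%:Z - r.+1%:Z)%R) (fun j => (j%:Z - r.+1%:Z)%R)).
- by rewrite subrr.
- move=> i j _ _ /= E; lia.
- by [].
- move=> j _ /=; lia.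
- by move=> j e _ _ /= ->.
- move=> j e h1 _ /= E; lia.
Qed.
Section Chain.
Variables (G : mgraph) (e0 : edge G).

Definition eout (u : vert G) : edge G :=
  match pselect (exists e, src e = u) with
  | left h => proj1_sig (cid h) | right _ => e0 end.
Definition ein (u : vert G) : edge G :=
  match pselect (exists e, tgt e = u) with
  | left h => proj1_sig (cid h) | right _ => e0 end.
Definition gsucc u := tgt (eout u).
Definition gpred u := src (ein u).

Definition reg (u : vert G) : Prop :=
  [/\ (exists e, src e = u), (exists e, tgt e = u),
      (forall e1 e2, src e1 = u -> src e2 = u -> e1 = e2) &
      (forall e1 e2, tgt e1 = u -> tgt e2 = u -> e1 = e2)].

Lemma eout_src u : (exists e, src e = u) -> src (eout u) = u.
Proof. by rewrite /eout; case: pselect => // h _; exact: (proj2_sig (cid h)). Qed.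
Lemma ein_tgt u : (exists e, tgt e = u) -> tgt (ein u) = u.
Proof. by rewrite /ein; case: pselect => // h _; exact: (proj2_sig (cid h)). Qed.

Lemma eout_uniq u e : reg u -> src e = u -> e = eout u.
Proof. by case=> h1 _ h3 _ E; apply: h3 => //; apply: eout_src. Qed.
Lemma ein_uniq u e : reg u -> tgt e = u -> e = ein u.
Proof. by case=> _ h2 _ h4 E; apply: h4 => //; apply: ein_tgt. Qed.

Lemma succ_pred w : reg w -> reg (gpred w) -> gsucc (gpred w) = w.
Proof.
move=> rw rp; rewrite /gsucc -(eout_uniq rp (erefl (gpred w))).
by case: rw => _ h2 _ _; rewrite ein_tgt.
Qed.

Variables (x : vert G) (r : nat).
Hypothesis HR : forall u, dist_le r.+1 x u -> reg u.
Hypothesis HC : forall u l, (0 < l)%N -> (l <= r + r + 2)%N ->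
  (forall k, (k <= l)%N -> dist_le r.+1 x (iter k gsucc u)) ->
  iter l gsucc u = u -> False.

Lemma near_pred k : (k <= r.+1)%N -> dist_le k x (iter k gpred x).
Proof.
elim: k => [|k IH] hk //=.
right; exists (iter k gpred x); split; first exact: IH (ltnW hk).
have rw : reg (iter k gpred x).
  by apply: HR; apply: (dist_le_mono (ltnW hk)); apply: IH (ltnW hk).
exists (ein (iter k gpred x)); right; split => //.
by case: rw => _ h2 _ _; rewrite ein_tgt.
Qed.

Lemma near_succ k : (k <= r.+1)%N -> dist_le k x (iter k gsucc x).
Proof.
elim: k => [|k IH] hk //=.
right; exists (iter k gsucc x); split; first exact: IH (ltnW hk).
have rw : reg (iter k gsucc x).
  by apply: HR; apply: (dist_le_mono (ltnW hk)); apply: IH (ltnW hk).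
exists (eout (iter k gsucc x)); left; split => //.
by case: rw => h1 _ _ _; rewrite eout_src.
Qed.

Definition y0 := iter r.+1 gpred x.
Definition lphi j := iter j gsucc y0.
Definition lpsi j := eout (lphi j).

Lemma lphi_left j : (j <= r.+1)%N -> lphi j = iter (r.+1 - j) gpred x.
Proof.
elim: j => [|j IH] hj; first by rewrite subn0.
rewrite /lphi iterS -/(lphi j) IH ?(ltnW hj) //.
have -> : (r.+1 - j = (r - j).+1)%N by lia.
have -> : (r.+1 - j.+1 = r - j)%N by lia.
rewrite iterS succ_pred //; apply: HR.
- by apply: (dist_le_mono (k := r - j)); [lia| apply: near_pred; lia].
- by apply: (dist_le_mono (k := (r - j).+1)); [lia| apply: near_pred; lia].
Qed.

Lemma lphi_x : lphi r.+1 = x.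
Proof. by rewrite lphi_left // subnn. Qed.

Lemma lphi_right m : lphi (m + r.+1) = iter m gsucc x.
Proof. by rewrite /lphi iterD -/(lphi r.+1) lphi_x. Qed.

Lemma lphi_near j : (j <= r + r + 2)%N -> dist_le r.+1 x (lphi j).
Proof.
move=> hj; case: (leqP j r.+1) => h.
  rewrite lphi_left //; apply: (dist_le_mono (k := r.+1 - j)); first lia.
  by apply: near_pred; lia.
have -> : j = (j - r.+1) + r.+1 by lia.
rewrite lphi_right; apply: (dist_le_mono (k := j - r.+1)); first lia.
by apply: near_succ; lia.
Qed.

Lemma lphi_reg j : (j <= r + r + 2)%N -> reg (lphi j).
Proof. by move=> hj; apply: HR; apply: lphi_near. Qed.

Lemma chain_iso : rooted_iso (Proot r) (rball_root x r).
Proof.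
apply: (@line_iso G x r lphi lpsi).
- exact: lphi_x.
- move=> i j hi hj E.
  wlog lij : i j hi hj E / (i <= j)%N.
    move=> W; case: (leqP i j) => h; first exact: W.
    by symmetry; apply: W => //; exact: ltnW.
  case: (ltngtP i j) lij => // hlt _.
  exfalso; apply: (HC (u := lphi i) (l := j - i)); try lia.
    move=> k hk; rewrite /lphi -iterD; apply: lphi_near; lia.
  by rewrite /lphi -iterD subnK ?(ltnW hlt) // -/(lphi j) E.
- move=> j hj; rewrite /lpsi; case: (lphi_reg (j := j) _); try lia.
  by move=> h1 _ _ _; rewrite eout_src.
- by [].
- move=> j e _ hj E; rewrite /lpsi; apply: eout_uniq => //; apply: lphi_reg; lia.
- move=> j e h0 hj E.
  have R := lphi_reg (j := j) ltac:(lia).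
  rewrite (ein_uniq R E); symmetry; apply: ein_uniq => //.
  by rewrite /lpsi -/(gsucc _) /lphi -iterS prednK.
Qed.
End Chain.
Section Rz.
Variables (A : finType) (L : pred (seq A)) (n : nat).
Hypothesis HF : factorial_language L.
Local Notation V := (rauzyV L n).
Local Notation E := (rauzyE L n).
Local Notation RG := (rauzy L n).

Definition rsrc (e : E) : V := src (m := RG) e.
Definition rtgt (e : E) : V := tgt (m := RG) e.
Definition tlast (t : n.+1.-tuple A) : A := last (thead t) (behead t).

Lemma tuple_rcons (t : n.+1.-tuple A) : (t : seq A) = rcons (wpre t) (tlast t).
Proof. by rewrite {1}(tuple_eta t) /= lastI. Qed.

Lemma tuple_cons (t : n.+1.-tuple A) : (t : seq A) = thead t :: wsuf t.
Proof. by rewrite {1}(tuple_eta t). Qed.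

Lemma val_rsrc (e : E) : (val (rsrc e) : seq A) = wpre (val e).
Proof. by []. Qed.
Lemma val_rtgt (e : E) : (val (rtgt e) : seq A) = wsuf (val e).
Proof. by []. Qed.

Lemma gsucc_step (e0 : E) (w : V) : reg (G := RG) w ->
  exists b, (val (gsucc (G := RG) e0 w) : seq A) = behead (rcons (val w) b).
Proof.
move=> rw; set e := eout (G := RG) e0 w; exists (tlast (val e)).
have hs : src e = w by case: rw => h1 _ _ _; rewrite /e eout_src.
rewrite /gsucc -/e -hs /=.
by rewrite -tuple_rcons.
Qed.

Lemma gsucc_iter (e0 : E) (u : V) k :
  (forall i, (i < k)%N -> reg (G := RG) (iter i (gsucc (G := RG) e0) u)) ->
  exists s : seq A, size s = k /\
    (val (iter k (gsucc (G := RG) e0) u) : seq A) = drop k (val u ++ s).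
Proof.
elim: k => [|k IH] H; first by exists [::]; rewrite cats0 drop0.
have [s [Ss Es]] := IH (fun i hi => H i (ltnW hi)).
have [b Eb] := gsucc_step e0 (H k (ltnSn k)).
exists (rcons s b); split; first by rewrite size_rcons Ss.
rewrite iterS Eb Es -rcons_cat -drop_rcons; last by rewrite size_cat Ss; lia.
by rewrite -drop1 drop_drop add1n.
Qed.
Definition outEd (u : V) : {set E} := [set e | rsrc e == u].
Definition inEd (u : V) : {set E} := [set e | rtgt e == u].
Definition Bad r : {set V} := [set u | (#|outEd u| != 1) || (#|inEd u| != 1) ||
   has (fun l => per l (val u : seq A)) (iota 1 (r + r + 2))].

Lemma reg_of (u : V) : #|outEd u| == 1 -> #|inEd u| == 1 -> reg (G := RG) u.
Proof.
move=> /cards1P [e Ho] /cards1P [f Hi]; split.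
- exists e; have : e \in outEd u by rewrite Ho inE.
  by rewrite inE => /eqP.
- exists f; have : f \in inEd u by rewrite Hi inE.
  by rewrite inE => /eqP.
- move=> e1 e2 h1 h2.
  have : e1 \in outEd u by rewrite inE; apply/eqP.
  have : e2 \in outEd u by rewrite inE; apply/eqP.
  by rewrite Ho !inE => /eqP -> /eqP ->.
- move=> e1 e2 h1 h2.
  have : e1 \in inEd u by rewrite inE; apply/eqP.
  have : e2 \in inEd u by rewrite inE; apply/eqP.
  by rewrite Hi !inE => /eqP -> /eqP ->.
Qed.

Fixpoint NB r k : {set V} :=
  if k is k'.+1 then NB r k' :|: (rtgt @: [set e | rsrc e \in NB r k'])
                              :|: (rsrc @: [set e | rtgt e \in NB r k'])
  else Bad r.

Lemma NB_dist r k (u v : V) : u \in Bad r -> dist_le (G := RG) k u v -> v \in NB r k.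
Proof.
elim: k v => [|k IH] v hu /=; first by move=> <-.
case=> [H|[z [Hz [e [[E1 E2]|[E1 E2]]]]]].
- by rewrite !inE IH.
- apply/setUP; left; apply/setUP; right; apply/imsetP; exists e.
    by rewrite inE /rsrc E1; exact: IH.
  by rewrite /rtgt E2.
- apply/setUP; right; apply/imsetP; exists e.
    by rewrite inE /rtgt E2; exact: IH.
  by rewrite /rsrc E1.
Qed.

Lemma good_of r (v : V) : v \notin NB r r.+1 -> @good_vertex A L n r v.
Proof.
move=> hv.
have HB : forall u, dist_le (G := RG) r.+1 v u -> u \notin Bad r.
  move=> u hu; apply/negP => hb; move/negP: hv; apply.
  exact: (NB_dist hb (dist_le_sym hu)).
have HR : forall u, dist_le (G := RG) r.+1 v u -> reg (G := RG) u.
  move=> u /HB; rewrite inE !negb_or !negbK => /andP [/andP [h1 h2] _].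
  exact: reg_of.
have [[e0 _] _ _ _] := HR v (dist_le_refl _ _).
have HC : forall u l, (0 < l)%N -> (l <= r + r + 2)%N ->
  (forall k, (k <= l)%N -> dist_le (G := RG) r.+1 v (iter k (gsucc (G := RG) e0) u)) ->
  iter l (gsucc (G := RG) e0) u = u -> False.
  move=> u l l0 hl hk E.
  have hu := HB u (hk 0%N (leq0n _)).
  have [s [Ss Es]] := gsucc_iter (e0 := e0) (u := u) (k := l)
     (fun i hi => HR _ (hk i (ltnW hi))).
  rewrite E in Es; have P := per_of_drop Es.
  move: hu; rewrite inE => /negP; apply; apply/orP; right.
  by apply/hasP; exists l => //; rewrite mem_iota; lia.
rewrite /good_vertex.
exact: (rooted_iso_trans (rooted_iso_sym (chain_iso HR HC)) (Zline_iso r)).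
Qed.
End Rz.
Lemma expn_mono_base a e : (a ^ e <= a.+1 ^ e)%N.
Proof. by elim: e => // e IH; rewrite !expnS leq_mul. Qed.

Lemma card_bool_split (T : finType) (b : pred T) :
  (#|[set u | b u]| + #|[set u | ~~ b u]| = #|T|)%N.
Proof.
rewrite -(cardsC [set u | b u]); congr (_ + _); apply: eq_card => u.
by rewrite !inE.
Qed.

Lemma sum_bool_card (T : finType) (b : pred T) :
  (\sum_(u : T) (b u : nat) = #|[set u | b u]|)%N.
Proof.
rewrite -sum1dep_card [in RHS]big_mkcond; apply: eq_bigr => u _.
by case: (b u).
Qed.

Lemma deg_count (T : finType) (o : T -> nat) :
  (#|[set u | o u != 1]| + #|T| <= 2 * #|[set u | o u == 0]| + \sum_(u : T) o u)%N.
Proof.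
have H1 : (\sum_(u : T) ((o u != 0 : nat) + (1 < o u : nat)) <= \sum_(u : T) o u)%N.
  by apply: leq_sum => u _; case: (o u) => [|[|k]].
rewrite big_split /= !sum_bool_card in H1.
have H2 := card_bool_split (fun u => o u == 0).
have H3 : (#|[set u | o u != 1]| <= #|[set u | o u == 0]| + #|[set u | 1 < o u]|)%N.
  apply: leq_trans (leq_card_setU _ _).1; apply: subset_leq_card.
  by apply/fintype.subsetP => u; rewrite !inE; case: (o u) => [|[|k]].
lia.
Qed.

Lemma card_has (T : finType) (Q : nat -> pred T) (s : seq nat) :
  (#|[set u | has (fun l => Q l u) s]| <= \sum_(l <- s) #|[set u | Q l u]|)%N.
Proof.
elim: s => [|x s IH]; first by rewrite big_nil leqn0 cards_eq0; apply/eqP/finset.setP => u; rewrite !inE.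
rewrite big_cons; apply: leq_trans (leq_add (leqnn _) IH).
apply: leq_trans (leq_card_setU _ _).1; apply: subset_leq_card.
by apply/fintype.subsetP => u; rewrite !inE.
Qed.
Section Rz2.
Variables (A : finType) (L : pred (seq A)) (n : nat).
Hypothesis HF : factorial_language L.
Local Notation V := (rauzyV L n).
Local Notation E := (rauzyE L n).
Local Notation RG := (rauzy L n).

Lemma L_wpre (t : n.+1.-tuple A) : L t -> L (wpre t).
Proof. by move=> h; apply: (@HF [::] (wpre t) [:: tlast t]); rewrite /= cats1 -tuple_rcons. Qed.
Lemma L_wsuf (t : n.+1.-tuple A) : L t -> L (wsuf t).
Proof. by move=> h; apply: (@HF [:: thead t] (wsuf t) [::]); rewrite cats0 /= -tuple_cons. Qed.

Lemma card_setV (P : pred (n.-tuple A)) :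
  #|[set u : V | P (val u)]| = #|[set t in Ln L n | P t]|.
Proof.
rewrite -(card_imset _ val_inj); apply: eq_card => t; rewrite !inE /Ln.
apply/imsetP/andP => [[u hu ->]|[h1 h2]].
  by rewrite inE in hu; split => //; exact: (proj2_sig u).
by exists (exist _ t h1) => //; rewrite inE.
Qed.

Lemma card_V : #|{: V}| = complexity L n.
Proof. by rewrite card_sig /complexity /Ln; apply: eq_card => t; rewrite !inE. Qed.

Lemma card_E : #|{: E}| = complexity L n.+1.
Proof.
rewrite card_sig /complexity /Ln; apply: eq_card => t; rewrite !inE.
by case h: (L t) => //=; rewrite L_wpre ?L_wsuf.
Qed.

Lemma sum_out : (\sum_(u : V) #|outEd u| = #|{: E}|)%N.
Proof.
rewrite -sum1_card (partition_big (@rsrc A L n) xpredT) //=.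
apply: eq_bigr => u _; rewrite sum1dep_card; apply: eq_card => e; by rewrite !inE.
Qed.

Lemma sum_in : (\sum_(u : V) #|inEd u| = #|{: E}|)%N.
Proof.
rewrite -sum1_card (partition_big (@rtgt A L n) xpredT) //=.
apply: eq_bigr => u _; rewrite sum1dep_card; apply: eq_card => e; by rewrite !inE.
Qed.
Lemma out0 (u : V) : (#|outEd u| == 0) = ~~ right_prolongable L (val u : seq A).
Proof.
apply/idP/idP => [h0|hn].
  apply/existsP => -[a ha].
  pose t : n.+1.-tuple A := [tuple of rcons (val u) a].
  have ht : [&& L t, L (wpre t) & L (wsuf t)] by rewrite ha L_wpre ?L_wsuf.
  pose e : E := exist _ t ht.
  have he : rsrc e = u.
    apply: val_inj; apply: val_inj => /=.
    have := tuple_rcons t; rewrite /= => /rcons_inj [] <- _ //.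
  move: h0; rewrite cards_eq0 => /eqP h0.
  have : e \in outEd u by rewrite inE he.
  by rewrite h0 inE.
case: (posnP #|outEd u|) => // hp; move/negP: hn; case.
case/card_gt0P: hp => e; rewrite inE => /eqP he.
apply/existsP; exists (tlast (val e)).
have := proj2_sig e => /and3P [h1 _ _].
by rewrite -he val_rsrc -tuple_rcons.
Qed.

Lemma in0 (u : V) : (#|inEd u| == 0) = ~~ left_prolongable L (val u : seq A).
Proof.
apply/idP/idP => [h0|hn].
  apply/existsP => -[a ha].
  pose t : n.+1.-tuple A := [tuple of a :: val u].
  have ht : [&& L t, L (wpre t) & L (wsuf t)] by rewrite ha L_wpre ?L_wsuf.
  pose e : E := exist _ t ht.
  have he : rtgt e = u by apply: val_inj; apply: val_inj.
  move: h0; rewrite cards_eq0 => /eqP h0.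
  have : e \in inEd u by rewrite inE he.
  by rewrite h0 inE.
case: (posnP #|inEd u|) => // hp; move/negP: hn; case.
case/card_gt0P: hp => e; rewrite inE => /eqP he.
apply/existsP; exists (thead (val e)).
have := proj2_sig e => /and3P [h1 _ _].
by rewrite -he val_rtgt -tuple_cons.
Qed.
Lemma inj_out : injective (fun e : E => (rsrc e, tlast (val e))).
Proof.
move=> e1 e2 [h1 h2]; apply: val_inj; apply: val_inj => /=.
rewrite (tuple_rcons (val e1)) (tuple_rcons (val e2)) h2; congr rcons.
exact: h1.
Qed.

Lemma inj_in : injective (fun e : E => (rtgt e, thead (val e))).
Proof.
move=> e1 e2 [h1 h2]; apply: val_inj; apply: val_inj => /=.
rewrite (tuple_cons (val e1)) (tuple_cons (val e2)) h2; congr cons.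
exact: h1.
Qed.

Lemma edges_src (S : {set V}) : (#|[set e : E | rsrc e \in S]| <= #|S| * #|A|)%N.
Proof.
rewrite -(card_imset _ inj_out) -[#|A|]cardsT -cardsX.
apply: subset_leq_card; apply/fintype.subsetP => p /imsetP [e he ->].
by rewrite !inE in he *; rewrite he.
Qed.

Lemma edges_tgt (S : {set V}) : (#|[set e : E | rtgt e \in S]| <= #|S| * #|A|)%N.
Proof.
rewrite -(card_imset _ inj_in) -[#|A|]cardsT -cardsX.
apply: subset_leq_card; apply/fintype.subsetP => p /imsetP [e he ->].
by rewrite !inE in he *; rewrite he.
Qed.

Lemma card_NB r k : (#|NB L n r k| <= (#|A| + #|A|).+1 ^ k * #|Bad L n r|)%N.
Proof.
elim: k => [|k IH] /=; first by rewrite expn0 mul1n.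
have H1 := (leq_card_setU (NB L n r k :|: ((@rtgt A L n) @: [set e | rsrc e \in NB L n r k]))
                          ((@rsrc A L n) @: [set e | rtgt e \in NB L n r k])).1.
have H2 := (leq_card_setU (NB L n r k) ((@rtgt A L n) @: [set e | rsrc e \in NB L n r k])).1.
have H3 := leq_trans (leq_imset_card (@rtgt A L n) [set e | rsrc e \in NB L n r k]) (edges_src (NB L n r k)).
have H4 := leq_trans (leq_imset_card (@rsrc A L n) [set e | rtgt e \in NB L n r k]) (edges_tgt (NB L n r k)).
rewrite expnS -mulnA.
apply: (leq_trans H1); apply: leq_trans (leq_mul (leqnn _) IH).
apply: leq_trans (leq_add H2 H4) _.
apply: leq_trans (leq_add (leq_add (leqnn _) H3) (leqnn _)) _.
by rewrite mulSn mulnDl (mulnC #|A|) addnA.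
Qed.

Lemma card_per l : (0 < l)%N -> (#|[set u : V | per l (val u : seq A)]| <= #|A|.+1 ^ l)%N.
Proof.
move=> l0; apply: (@leq_trans #|{: (minn l n).-tuple A}|).
  rewrite -(card_in_imset (f := fun u : V => take_tuple l (val u))); first exact: max_card.
  move=> u1 u2; rewrite !inE => p1 p2 /(congr1 val) /= E.
  apply: val_inj; apply: val_inj; apply: (per_inj l0 _ p1 p2 E).
  by rewrite !size_tuple.
rewrite card_tuple; apply: leq_trans (expn_mono_base _ _) _.
by apply: leq_pexp2l => //; exact: geq_minl.
Qed.

Definition Kc r := (\sum_(l <- iota 1 (r + r + 2)) #|A|.+1 ^ l)%N.

Lemma card_Bad r : (#|Bad L n r| <= #|[set u : V | #|outEd u| != 1]| +
   #|[set u : V | #|inEd u| != 1]| + Kc r)%N.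
Proof.
have H := card_has (fun l (u : V) => per l (val u : seq A)) (iota 1 (r + r + 2)).
have H' : (\sum_(l <- iota 1 (r + r + 2)) #|[set u : V | per l (val u : seq A)]| <= Kc r)%N.
  rewrite /Kc big_seq [X in (_ <= X)%N]big_seq; apply: leq_sum => l.
  by rewrite mem_iota => /andP [h _]; exact: card_per.
apply: leq_trans (leq_add (leq_add (leqnn _) (leqnn _)) (leq_trans H H')).
apply: leq_trans (leq_add (leq_card_setU _ _).1 (leqnn _)).
apply: leq_trans (leq_card_setU _ _).1; apply: subset_leq_card.
by apply/fintype.subsetP => u; rewrite !inE.
Qed.
Lemma main_count r :
  (complexity L n <= #|[set v : V | `[< @good_vertex A L n r v >] ]| +
    (#|A| + #|A|).+1 ^ r.+1 *
    (2 * (complexity L n - #|[set t in Ln L n | right_prolongable L t]|) +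
     2 * (complexity L n - #|[set t in Ln L n | left_prolongable L t]|) +
     2 * (complexity L n.+1 - complexity L n) + Kc r))%N.
Proof.
set p := complexity L n; set p1 := complexity L n.+1.
set c := (#|A| + #|A|).+1 ^ r.+1.
have G1 : (#|~: NB L n r r.+1| <= #|[set v : V | `[< @good_vertex A L n r v >] ]|)%N.
  apply: subset_leq_card; apply/fintype.subsetP => v hv.
  rewrite inE; apply/asboolP; apply: good_of.
  by move: hv; rewrite inE.
have G2 := cardsC (NB L n r r.+1).
have CV : #|{: V}| = p by exact: card_V.
have CE : #|{: E}| = p1 by exact: card_E.
have G3 := card_NB r r.+1.
have G4 := card_Bad r.
have O1 : (#|[set u : V | #|outEd u| != 1]| + p <=
    2 * #|[set u : V | #|outEd u| == 0]| + p1)%N.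
  by have := deg_count (fun u : V => #|outEd u|); rewrite sum_out card_E card_V.
have I1 : (#|[set u : V | #|inEd u| != 1]| + p <=
    2 * #|[set u : V | #|inEd u| == 0]| + p1)%N.
  by have := deg_count (fun u : V => #|inEd u|); rewrite sum_in card_E card_V.
have G2' : (#|NB L n r r.+1| + #|~: NB L n r r.+1| = p)%N.
  by rewrite G2 card_V.
have O0 : (#|[set u : V | #|outEd u| == 0]| +
           #|[set t in Ln L n | right_prolongable L t]| = p)%N.
  have -> : #|[set u : V | #|outEd u| == 0]| =
            #|[set u : V | ~~ right_prolongable L (val u : seq A)]|.
    by apply: eq_card => u; rewrite !inE out0.
  rewrite -(card_setV (fun t => right_prolongable L t)) addnC.
  by rewrite (card_bool_split (fun u : V => right_prolongable L (val u : seq A))).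
have I0 : (#|[set u : V | #|inEd u| == 0]| +
           #|[set t in Ln L n | left_prolongable L t]| = p)%N.
  have -> : #|[set u : V | #|inEd u| == 0]| =
            #|[set u : V | ~~ left_prolongable L (val u : seq A)]|.
    by apply: eq_card => u; rewrite !inE in0.
  rewrite -(card_setV (fun t => left_prolongable L t)) addnC.
  by rewrite (card_bool_split (fun u : V => left_prolongable L (val u : seq A))).
set X := (2 * (p - #|[set t in Ln L n | right_prolongable L t]|) +
     2 * (p - #|[set t in Ln L n | left_prolongable L t]|) +
     2 * (p1 - p) + Kc r)%N.
have BX : (#|Bad L n r| <= X)%N.
  rewrite /X; lia.
have := leq_mul (leqnn c) BX.
lia.
Qed.
End Rz2.
Section Analysis.
Local Open Scope ring_scope.

Lemma exists_good_n (R : realType) (A : finType) (L : pred (seq A)) :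
  unbounded_complexity L -> subexponential L R ->
  forall d N : nat, exists n : nat, [/\ (N <= n)%N, (d.+1 <= complexity L n)%N &
     (d.+1 * complexity L n.+1 <= d.+2 * complexity L n)%N].
Proof.
move=> HU HS d N; apply: contrapT => Hn.
have Hall : forall n, (N <= n)%N -> (d.+1 <= complexity L n)%N ->
    (d.+2 * complexity L n < d.+1 * complexity L n.+1)%N.
  move=> n h1 h2; rewrite ltnNge; apply/negP => h3; by apply: Hn; exists n; split.
have [n0 hn0] := HU (d.+1 + \sum_(k < N) complexity L k)%N.
have n0N : (N <= n0)%N.
  case: (leqP N n0) => // h.
  have h' : (complexity L n0 <= \sum_(k < N) complexity L k)%N.
    by rewrite (bigD1 (Ordinal h)) //= leq_addr.
  exfalso; lia.
pose q : R := d.+2%:R / d.+1%:R.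
have q1 : 1 < q by rewrite /q ltr_pdivlMr ?ltr0n // mul1r ltr_nat.
have q0 : 0 < q by apply: lt_trans q1.
have pge : forall k, (d.+1 <= complexity L (n0 + k))%N /\
                     q ^+ k <= (complexity L (n0 + k))%:R.
  elim=> [|k [IH1 IH2]].
    rewrite addn0 expr0; split; first lia.
    by rewrite ler1n; lia.
  have H := Hall (n0 + k)%N ltac:(lia) IH1.
  rewrite addnS; split; first nia.
  rewrite exprS; apply: le_trans (ler_wpM2l (ltW q0) IH2) _.
  rewrite /q mulrAC ler_pdivrMr ?ltr0n // -!natrM ler_nat mulnC; lia.
pose c := ln q.
have c0 : 0 < c by apply: ln_gt0.
rewrite /subexponential in HS; move/cvgrPdist_lt: HS => HS.
have := HS (c / 2) ltac:(by rewrite divr_gt0).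
case=> M _ HM.
pose k := (M + n0).+1%N.
have := HM (n0 + k)%N ltac:(rewrite /k /=; lia).
rewrite /= sub0r normrN => hlt.
have [_ hq] := pge k.
have hp : 0 < (complexity L (n0 + k))%:R :> R by apply: lt_le_trans hq; apply: exprn_gt0.
have hln : c * k%:R <= ln (complexity L (n0 + k))%:R.
  rewrite /c mulr_natr -lnXn //.
  by rewrite ler_ln ?posrE ?exprn_gt0.
have hnk0 : 0 < (n0 + k)%:R :> R by rewrite ltr0n; lia.
have hNk : (n0 + k)%:R <= 2 * k%:R :> R.
  by rewrite -natrM ler_nat; lia.
have hlt' : ln (complexity L (n0 + k))%:R < c / 2 * (n0 + k)%:R.
  by rewrite -ltr_pdivrMr //; apply: le_lt_trans hlt; apply: ler_norm.
nra.
Qed.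
Local Open Scope classical_set_scope.
Local Open Scope ring_scope.
Lemma cvg_sub (R : realType) (u : nat -> R) (l : R) (nd : nat -> nat) :
  (forall d, (d <= nd d)%N) -> u @ \oo --> l -> (fun d => u (nd d)) @ \oo --> l.
Proof.
move=> hnd /cvgrPdist_lt H; apply/cvgrPdist_lt => e e0.
have [N _ HN] := H e e0; exists N => // d /= hd.
by apply: HN => /=; exact: leq_trans hd (hnd d).
Qed.

Lemma cvg0_le (R : realType) (f : nat -> R) (M : R) :
  (forall d, 0 <= f d <= M * d.+1%:R^-1) -> f @ \oo --> 0.
Proof.
move=> H.
apply: (@squeeze_cvgr _ _ _ _ (fun _ => 0) (fun d => M * d.+1%:R^-1)).
- exact: nearW.
- exact: cvg_cst.
rewrite -(mulr0 M); apply: cvgMl_tmp; exact: cvg_harmonic.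
Qed.

Lemma div_le (R : realType) (x y p q : nat) : (0 < p)%N -> (0 < q)%N ->
  (x * q <= y * p)%N -> x%:R / p%:R <= y%:R * q%:R^-1 :> R.
Proof.
move=> p0 q0 h.
rewrite ler_pdivrMr ?ltr0n // mulrAC ler_pdivlMr ?ltr0n // -!natrM ler_nat.
exact: h.
Qed.

Lemma cvgMl' (R : realType) (f : nat -> R) (a b : R) :
  f @ \oo --> b -> (fun x => a * f x) @ \oo --> a * b.
Proof. move=> H; exact: cvgMl_tmp. Qed.

Lemma card_cl_fs (T : finType) (P : T -> Prop) :
  #|[set v : T | `[< P v >] ]%SET| = #|[set v : T | `[< P v >] ]|.
Proof.
apply: eq_card => v; rewrite !inE; apply/idP/idP => h; first by apply/mem_set.
by move/set_mem: h.
Qed.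
Lemma conv_main (R : realType) (A : finType) (L : pred (seq A)) (nd : nat -> nat) r :
  factorial_language L -> almost_prolongable L R ->
  (forall d, (d <= nd d)%N) ->
  (forall d, (d.+1 <= complexity L (nd d))%N) ->
  (forall d, (d.+1 * complexity L (nd d).+1 <= d.+2 * complexity L (nd d))%N) ->
  (fun d => good_proportion R L (nd d) r) @ \oo --> (1 : R).
Proof.
move=> HF [HL HRp] hnd hp hq.
pose c := ((#|A| + #|A|).+1 ^ r.+1)%N.
pose P d := complexity L (nd d).
pose P1 d := complexity L (nd d).+1.
pose aR d := #|[set t in Ln L (nd d) | right_prolongable L t]|.
pose aL d := #|[set t in Ln L (nd d) | left_prolongable L t]|.
pose K := Kc A r.
pose T1 d : R := (P d - aR d)%:R / (P d)%:R.
pose T2 d : R := (P d - aL d)%:R / (P d)%:R.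
pose T3 d : R := (P1 d - P d)%:R / (P d)%:R.
pose T4 d : R := K%:R / (P d)%:R.
pose h d : R := c%:R * (2 * T1 d + 2 * T2 d + 2 * T3 d + T4 d).
have Pp d : 0 < (P d)%:R :> R by rewrite ltr0n; have := hp d; rewrite /P; lia.
have Pn0 d : (P d)%:R != 0 :> R by apply: lt0r_neq0.
have aRle d : (aR d <= P d)%N.
  rewrite /aR /P /complexity; apply: subset_leq_card.
  by apply/fintype.subsetP => t; rewrite inE => /andP [].
have aLle d : (aL d <= P d)%N.
  rewrite /aL /P /complexity; apply: subset_leq_card.
  by apply/fintype.subsetP => t; rewrite inE => /andP [].
have T1c : T1 @ \oo --> 0.
  have -> : T1 = (fun d => 1 - (aR d)%:R / (P d)%:R).
    apply: funext => d; rewrite /T1 natrB // mulrBl divff //.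
  rewrite -(subrr (1 : R)); apply: cvgB; first exact: cvg_cst.
  exact: (cvg_sub hnd HRp).
have T2c : T2 @ \oo --> 0.
  have -> : T2 = (fun d => 1 - (aL d)%:R / (P d)%:R).
    apply: funext => d; rewrite /T2 natrB // mulrBl divff //.
  rewrite -(subrr (1 : R)); apply: cvgB; first exact: cvg_cst.
  exact: (cvg_sub hnd HL).
have T3c : T3 @ \oo --> 0.
  apply: (@cvg0_le _ _ 1) => d; apply/andP; split.
    by rewrite /T3 divr_ge0 // ler0n.
  rewrite /T3 -[X in _ <= X * _]/(1%:R); apply: div_le => //; first by rewrite /P; have := hp d; lia.
  have := hq d; rewrite /P1 /P; nia.
have T4c : T4 @ \oo --> 0.
  apply: (@cvg0_le _ _ K%:R) => d; apply/andP; split.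
    by rewrite /T4 divr_ge0 // ler0n.
  rewrite /T4; apply: div_le => //; first by rewrite /P; have := hp d; lia.
  by apply: leq_mul => //; exact: hp.
have hc : h @ \oo --> 0.
  have H := cvgMl' (a := c%:R) (cvgD (cvgD (cvgD (cvgMl' (a := 2) T1c) (cvgMl' (a := 2) T2c))
                                        (cvgMl' (a := 2) T3c)) T4c).
  rewrite !mulr0 !addr0 mulr0 in H; exact: H.
apply: (@squeeze_cvgr _ _ _ _ (fun d => 1 - h d) (fun _ => 1)).
- apply: nearW => d; apply/andP; split; last first.
    rewrite /good_proportion ler_pdivrMr ?mul1r -/(P d) ?Pp // ler_nat.
    rewrite /P -card_V; exact: max_card.
  have MC := main_count (nd d) HF r.
  rewrite /good_proportion -/(P d) -card_cl_fs.
  have -> : h d = ((c * (2 * (P d - aR d) + 2 * (P d - aL d) + 2 * (P1 d - P d) + K))%N)%:R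
                  / (P d)%:R.
    rewrite /h /T1 /T2 /T3 /T4 (natrM R c) !(natrD R); field; exact: Pn0.
  pose G := #|[set v : rauzyV L (nd d) | `[< @good_vertex A L (nd d) r v >] ]%SET|.
  have MC' : (P d)%:R <= G%:R + ((c * (2 * (P d - aR d) + 2 * (P d - aL d)
               + 2 * (P1 d - P d) + K))%N)%:R :> R.
    by rewrite -(natrD R) ler_nat; exact: MC.
  rewrite -[X in X - _](divff (Pn0 d)) -mulrBl.
  apply: ler_wpM2r; first by rewrite invr_ge0 ler0n.
  lra.
- have := cvgB (cvg_cst (1 : R)) hc; rewrite subr0; exact.
- exact: cvg_cst.
Qed.
End Analysis.
Unset Implicit Arguments.
Set Strict Implicit.

Theorem lemma2p5 (R : realType) (A : finType) (L : pred (seq A)) :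
  factorial_language L ->
  almost_prolongable L R ->
  unbounded_complexity L ->
  subexponential L R ->
  exists nd : nat -> nat,
    (forall d, (0 < nd d)%N) /\ (forall d, (nd d < nd d.+1)%N) /\
    rauzy_converges_to_Z R L nd.
Proof.
move=> HF HAP HU HS.
have CH := exists_good_n HU HS.
pose g d N := proj1_sig (cid (CH d N)).
have gP d N : [/\ (N <= g d N)%N, (d.+1 <= complexity L (g d N))%N &
   (d.+1 * complexity L (g d N).+1 <= d.+2 * complexity L (g d N))%N].
  exact: (proj2_sig (cid (CH d N))).
pose nd := fix f d := if d is d'.+1 then g d (f d').+1 else g 0%N 1%N.
have ndS d : nd d.+1 = g d.+1 (nd d).+1 by [].
have nd0 : nd 0%N = g 0%N 1%N by [].
have hP d : (d.+1 <= complexity L (nd d))%N /\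
    (d.+1 * complexity L (nd d).+1 <= d.+2 * complexity L (nd d))%N.
  case: d => [|d]; first by rewrite nd0; case: (gP 0%N 1%N).
  by rewrite ndS; case: (gP d.+1 (nd d).+1).
have hinc d : (nd d < nd d.+1)%N by rewrite ndS; case: (gP d.+1 (nd d).+1).
have hpos d : (0 < nd d)%N.
  case: d => [|d]; first by rewrite nd0; case: (gP 0%N 1%N).
  exact: leq_ltn_trans (leq0n _) (hinc d).
have hge d : (d <= nd d)%N by elim: d => // d IH; have := hinc d; lia.
exists nd; split; first exact: hpos.
split; first exact: hinc.
move=> r; apply: conv_main => // d; [exact: (hP d).1 | exact: (hP d).2].
Qed.
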